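(* Let $G$ be a quasi-regular mixed lattice group. (a) Let $u,v_1,v_2\in G$ with $0\preceq u$, $0\le v_1$, $0\preceq v_2$ and $u\le v_1+v_2$. Then there exist $u_1,u_2\in G$ with $0\le u_1\le v_1$, $0\preceq u_2\le v_2$ and $u=u_1+u_2$. Moreover, if $0\preceq v_1$ then $0\preceq u_1$, and if $u\preceq v_1+v_2$ then $u_2\preceq v_2$. (b) Let $u,v_1,v_2\in G$ with $0\le u$, $0\preceq v_1$, $0\le v_2$ and $u\preceq v_1+v_2$. Then there exist $u_1,u_2\in G$ with $0\le u_1\preceq v_1$, $0\le u_2\le v_2$ and $u=u_1+u_2$. Moreover, if $0\preceq u$ then $0\preceq u_1$.
   Context: A mixed lattice group is a commutative group $G$ with two translation-invariant partial orderings $\le$ (initial order) and $\preceq$ (specific order) such that for all $x,y\in G$ the mixed lower envelope $x\curlywedge y=\max\{w: w\preceq x,\ w\le y\}$ and the mixed upper envelope $x\curlyvee y=\min\{w: x\preceq w,\ y\le w\}$ exist (max/min with respect to $\le$). $G$ is quasi-regular if $G_{sp}=\{x: 0\preceq x\}$ is closed under $\curlywedge$ and $\curlyvee$. *)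

(* Defs.v *)
From mathcomp Require Import all_boot all_algebra.
Set Implicit Arguments. Unset Strict Implicit. Unset Printing Implicit Defensive.
Import GRing.Theory.
Local Open Scope ring_scope.

Definition partial_order (G : Type) (r : G -> G -> Prop) : Prop :=
  [/\ (forall x, r x x),
      (forall x y z, r x y -> r y z -> r x z) &
      (forall x y, r x y -> r y x -> x = y)].

Definition translation_invariant (G : zmodType) (r : G -> G -> Prop) : Prop :=
  forall x y z : G, r x y -> r (x + z) (y + z).

(* w is the mixed lower envelope x ⋏ y : the <=-maximum of
   {w : w ≼ x, w <= y}  (le = initial order, sp = specific order). *)
Definition is_mixed_lower (G : Type) (le sp : G -> G -> Prop) (x y w : G) : Prop :=
  [/\ sp w x, le w y & forall z, sp z x -> le z y -> le z w].

Definition is_mixed_upper (G : Type) (le sp : G -> G -> Prop) (x y w : G) : Prop :=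
  [/\ sp x w, le y w & forall z, sp x z -> le y z -> le w z].

Definition mixed_lattice_group (G : zmodType) (le sp : G -> G -> Prop) : Prop :=
  [/\ partial_order le, partial_order sp,
      translation_invariant le, translation_invariant sp &
      (forall x y : G, (exists w, is_mixed_lower le sp x y w) /\
                       (exists w, is_mixed_upper le sp x y w))].

Definition quasi_regular (G : zmodType) (le sp : G -> G -> Prop) : Prop :=
  (forall x y w : G, sp 0 x -> sp 0 y -> is_mixed_lower le sp x y w -> sp 0 w) /\
  (forall x y w : G, sp 0 x -> sp 0 y -> is_mixed_upper le sp x y w -> sp 0 w).

(* Main.v *)
Require Import Defs.
From mathcomp Require Import all_boot all_algebra.
Import GRing.Theory.
Local Open Scope ring_scope.

Lemma tr (G : zmodType) (r : G -> G -> Prop) (Hr : translation_invariant r)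
  (t : G) {x y x' y' : G} : r x y -> x' = x + t -> y' = y + t -> r x' y'.
Proof. by move=> H -> ->; apply: Hr. Qed.

Arguments tr {G r} Hr t {x y x' y'}.

Lemma low_tr (G : zmodType) (le sp : G -> G -> Prop)
  (Hl : translation_invariant le) (Hs : translation_invariant sp) (x y w t : G) :
  is_mixed_lower le sp x y w -> is_mixed_lower le sp (x + t) (y + t) (w + t).
Proof.
case=> h1 h2 h3; split.
- exact: Hs.
- exact: Hl.
move=> z hz1 hz2.
have: le (z - t) w.
  apply: h3.
  - by apply: (tr Hs (- t) hz1) => //; rewrite addrK.
  - by apply: (tr Hl (- t) hz2) => //; rewrite addrK.
by move=> h; apply: (tr Hl (t) h) => //; rewrite subrK.
Qed.

Arguments low_tr {G le sp} Hl Hs {x y w} t.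

Theorem theorem3p9 (G : zmodType) (le sp : G -> G -> Prop)
  (HG : mixed_lattice_group le sp) (Hq : quasi_regular le sp) :
  (forall u v1 v2 : G,
     sp 0 u -> le 0 v1 -> sp 0 v2 -> le u (v1 + v2) ->
     exists u1 u2 : G,
       [/\ le 0 u1, le u1 v1, sp 0 u2, le u2 v2 &
           [/\ u = u1 + u2, (sp 0 v1 -> sp 0 u1) & (sp u (v1 + v2) -> sp u2 v2)]]) /\
  (forall u v1 v2 : G,
     le 0 u -> sp 0 v1 -> le 0 v2 -> sp u (v1 + v2) ->
     exists u1 u2 : G,
       [/\ le 0 u1, sp u1 v1, le 0 u2, le u2 v2 &
           u = u1 + u2 /\ (sp 0 u -> sp 0 u1)]).
Proof.
case: HG => _ _ Hl Hs Henv; case: Hq => Hql _.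
split.
- move=> u v1 v2 hu hv1 hv2 huv.
  have [[m Hm] _] := Henv u v1.
  have Hm' := Hm; case: Hm' => m1 m2 m3.
  exists m, (u - m); split.
  + exact: m3.
  + exact: m2.
  + by apply: (tr Hs (- m) m1) => //; rewrite subrr.
  + have h : le (u - v2) m.
      apply: m3.
      * by apply: (tr Hs (u - v2) hv2); rewrite ?add0r // addrC subrK.
      * by apply: (tr Hl (- v2) huv) => //; rewrite addrK.
    by apply: (tr Hl (v2 - m) h); [by rewrite addrA subrK | by rewrite addrC subrK].
  + split.
    * by rewrite addrC subrK.
    * by move=> hs; exact: (Hql _ _ _ hu hs Hm).
    * move=> hs.
      have L := low_tr Hl Hs (v2 - u) Hm.
      have a1 : sp 0 (u + (v2 - u)) by rewrite addrC subrK.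
      have a2 : sp 0 (v1 + (v2 - u)).
        by apply: (tr Hs (- u) hs); rewrite ?subrr // addrA.
      have := Hql _ _ _ a1 a2 L => h.
      apply: (tr Hs (u - m) h); first by rewrite add0r.
      by rewrite -addrA [v2 - u + _]addrA subrK addrC subrK.
- move=> u v1 v2 hu hv1 hv2 huv.
  have [[m Hm] _] := Henv v1 u.
  have Hm' := Hm; case: Hm' => m1 m2 m3.
  exists m, (u - m); split.
  + exact: m3.
  + exact: m1.
  + by apply: (tr Hl (- m) m2) => //; rewrite subrr.
  + have h : le (u - v2) m.
      apply: m3.
      * by apply: (tr Hs (- v2) huv) => //; rewrite addrK.
      * by apply: (tr Hl (u - v2) hv2); rewrite ?add0r // addrC subrK.
    by apply: (tr Hl (v2 - m) h); [by rewrite addrA subrK | by rewrite addrC subrK].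
  + split; first by rewrite addrC subrK.
    by move=> hs; exact: (Hql _ _ _ hv1 hs Hm).
Qed.
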